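(* Let $n\ge 3$ and $m\ge 1$. Then $$A(n,m)=\big(A(n-1,m-1)\cdot (R_n\setminus\{e\})\big)\ \cup\ A(n-1,m),$$ and this union is disjoint. Here $A(n-1,m-1)\cdot(R_n\setminus\{e\})=\{uw\mid u\in A(n-1,m-1),\ w\in R_n\setminus\{e\}\}$.
   Context: For $k\ge 2$, $A_k$ is the alternating group on $\{1,\dots,k\}$, regarded as the subgroup of $A_n$ fixing $k+1,\dots,n$ for $k\le n$; products are compositions of permutations, rightmost factor applied first. $T(A_k)=\{(1\,2)(i\,j)\mid 1\le i<j\le k\}$, and for $v\in A_k$, $\ell_{T(A_k)}(v)=\min\{r\ge 0\mid v=t_1\cdots t_r,\ t_i\in T(A_k)\}$. $A(k,m)=\{v\in A_k\mid \ell_{T(A_k)}(v)=m\}$ (length computed within $A_k$). $R_n=\{(1\,2)(i\,n)\mid 1\le i<n\}\cup\{e\}$, $e$ the identity. *)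

(* Defs.v *)
From mathcomp Require Import all_boot fingroup perm.
Set Implicit Arguments. Unset Strict Implicit. Unset Printing Implicit Defensive.
Local Open Scope group_scope.

(* Points 1..N of the paper are the ordinals 0..N-1 of 'I_N.
   Paper composition: (u v)(x) = u (v x) (rightmost first).  MathComp's
   permutation product applies the LEFT factor first, so the paper's
   product u v is (v * u)%g. *)
Definition ppmul (N : nat) (u v : {perm 'I_N}) : {perm 'I_N} := v * u.

(* A_k inside S_N: even permutations fixing the points k+1..N
   (ordinals of value >= k). *)
Definition Alt_k (N k : nat) : {set {perm 'I_N}} :=
  [set s | ~~ odd_perm s & [forall x : 'I_N, (k <= x)%N ==> (s x == x)]].

(* T(A_k) = { (1 2)(i j) | 1 <= i < j <= k } *)
Definition Tgen (N k : nat) : {set {perm 'I_N}} :=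
  [set s | [exists a : 'I_N, exists b : 'I_N, exists i : 'I_N, exists j : 'I_N,
     [&& val a == 0%N, val b == 1%N, (i < j)%N, (j < k)%N &
         s == ppmul (tperm a b) (tperm i j)]]].

Fixpoint words (N k r : nat) : {set {perm 'I_N}} :=
  match r with
  | 0 => [set 1]
  | r'.+1 => [set ppmul t u | t in Tgen N k, u in words N k r']
  end.

(* A(k,m) = { v in A_k | l_{T(A_k)}(v) = m } *)
Definition Akm (N k m : nat) : {set {perm 'I_N}} :=
  [set v | [&& v \in Alt_k N k, v \in words N k m &
              [forall r : 'I_m, v \notin words N k r]]].

(* R_N = { (1 2)(i N) | 1 <= i < N } U {e} *)
Definition Rn (N : nat) : {set {perm 'I_N}} :=
  [set s | [exists a : 'I_N, exists b : 'I_N, exists i : 'I_N, exists j : 'I_N,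
     [&& val a == 0%N, val b == 1%N, val j == N.-1, (i < j)%N &
         s == ppmul (tperm a b) (tperm i j)]]] :|: [set 1].

(* Main.v *)
Require Import Defs.
From mathcomp Require Import all_boot fingroup perm.
From mathcomp Require Import zify.

Module Helpers.
Set Implicit Arguments. Unset Strict Implicit. Unset Printing Implicit Defensive.
Local Open Scope group_scope.

Section Cyc.
Variable T : finType.
Implicit Types (s : {perm T}) (x y : T).
Definition cc s := #|porbits s|.

Lemma cC s x y : cc (s * tperm x y) = cc (tperm x y * s).
Proof.
have E1 := porbits_mul_tperm s x y.
have E2 := porbits_mul_tperm s^-1 x y.
rewrite porbitV porbitsV in E2.
rewrite /cc -porbitsV invMg tpermV.
move: E1 E2 => /= E1 E2.
have := etrans E2 (esym E1). by move/addIn.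
Qed.

Lemma cLB s x y : cc s <= (cc (tperm x y * s)).+1.
Proof.
have := porbits_mul_tperm s x y; rewrite /cc /=.
have [->|_] := eqVneq x y; first by rewrite porbit_id tperm1 mul1g /= => E; lia.
case: (x \notin _) => /= E; rewrite ?doubleS ?double0 in E; lia.
Qed.

Lemma fixX s K i : s K = K -> (s ^+ i) K = K.
Proof. by move=> h; elim: i => [|i IH]; rewrite ?expg0 ?perm1 // expgSr permM IH h. Qed.

Lemma cFix s x K : s K = K -> x != K -> (cc (tperm x K * s)).+1 = cc s.
Proof.
move=> hK hx; have := porbits_mul_tperm s x K; rewrite /cc /= hx.
have -> : x \notin porbit s K.
  apply/negP => /porbitP [i hi]; move: hx; by rewrite hi fixX ?eqxx.
move=> /= E; lia.
Qed.

Lemma cbound s : cc s <= #|T|.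
Proof. exact: leq_imset_card. Qed.

Lemma c1 : cc 1 = #|T|.
Proof.
rewrite /cc /porbits card_imset // => x y; move/eqP; rewrite eq_porbit_mem.
by rewrite porbit.unlock cycle1 imset_set1 /aperm perm1 inE=> /eqP.
Qed.
End Cyc.

Section Main.
Variables (N : nat) (a b : 'I_N).
Hypotheses (ha : val a = 0%N) (hb : val b = 1%N).
Local Notation tab := (tperm a b).
Ltac glia := repeat match goal with
 | H : context [cc ?x] |- _ => revert H
 | H : context [card ?x] |- _ => revert H
 end; repeat match goal with
 | |- context [cc ?x] => let z := fresh "z" in move: (cc x) => z
 | |- context [card ?x] => let z := fresh "z" in move: (card x) => z end; intros; lia.
Definition HH (s : {perm 'I_N}) := (cc s + cc (tab * s))%N.

Lemma ab_neq : a != b.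
Proof. by apply/eqP => /(congr1 val); rewrite ha hb. Qed.

Lemma conj_tab x y : tab * tperm x y * tab = tperm (tab x) (tab y).
Proof. by rewrite -tpermJ /conjg tpermV mulgA. Qed.

Lemma tab2 : tab * tab = 1.
Proof. exact: tperm2. Qed.

Lemma ctab_mid s : cc (tab * (s * tab)) = cc s.
Proof. by rewrite mulgA cC mulgA tab2 mul1g. Qed.

Lemma HB s : exists r, (HH s + r.*2 = N.*2.-1)%N.
Proof.
have E := porbits_mul_tperm s a b.
have B1 := cbound s; have B2 := cbound (tab * s).
rewrite card_ord in B1 B2.
move: E B1 B2; rewrite /HH /cc /= ab_neq.
case: (a \notin _) => /= E B1 B2; rewrite ?doubleS ?double0 in E.
  exists (N - #|porbits s|)%N; glia.
exists (N - #|porbits s| - 1)%N; glia.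
Qed.

Lemma H1 : HH 1 = N.*2.-1.
Proof.
have := @cFix _ 1 a b (perm1 _) ab_neq.
rewrite /HH mulg1 c1 => E; rewrite -E; move: E; rewrite card_ord; glia.
Qed.

Lemma tmove x y : tperm x y * tab = tab * tperm (tab x) (tab y).
Proof. by rewrite -conj_tab !mulgA tab2 mul1g. Qed.

Lemma HL1 (u : {perm 'I_N}) (x y : 'I_N) : (HH u <= HH (u * (tperm x y * tab)) + 2)%N.
Proof.
rewrite /HH.
have -> : cc (tab * (u * (tperm x y * tab))) = cc (tperm x y * u).
  by rewrite [u * _]mulgA ctab_mid cC.
rewrite tmove mulgA cC.
have h1 := @cLB _ (u * tab) (tab x) (tab y); have h2 := @cLB _ u x y.
have h3 := @cC _ u a b; glia.
Qed.

Lemma HL2' (u : {perm 'I_N}) (i K : 'I_N) : u K = K -> i != K -> a != K -> b != K ->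
  (HH (u * (tperm i K * tab)) + 2 = HH u)%N.
Proof.
move=> hK hi haK hbK; rewrite /HH.
have tK : tab K = K by rewrite /tab tpermD.
have -> : cc (tab * (u * (tperm i K * tab))) = cc (tperm i K * u).
  by rewrite [u * _]mulgA ctab_mid cC.
rewrite tmove tK mulgA cC.
have h1 := @cFix _ u i K hK hi.
have h2 : (cc (tperm (tab i) K * (u * tab))).+1 = cc (u * tab).
  apply: cFix; first by rewrite permM hK tK.
  by apply: contra hi => /eqP h; rewrite -[i](tpermK a b) h tK.
have h3 := @cC _ u a b; glia.
Qed.

Lemma HL2 (u : {perm 'I_N}) (i K : 'I_N) : u K = K -> i != K -> a != K -> b != K ->
  (HH ((tperm i K * tab) * u) + 2 = HH u)%N.
Proof.
move=> hK hi haK hbK; rewrite /HH.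
have tK : tab K = K by rewrite /tab tpermD.
have -> : tab * (tperm i K * tab * u) = tperm (tab i) K * u.
  by rewrite !mulgA conj_tab tK.
rewrite -mulgA.
have h1 : (cc (tperm i K * (tab * u))).+1 = cc (tab * u).
  by apply: cFix => //; rewrite permM tK hK.
have h2 : (cc (tperm (tab i) K * u)).+1 = cc u.
  apply: cFix => //.
  by apply: contra hi => /eqP h; rewrite -[i](tpermK a b) h tK.
glia.
Qed.
End Main.

Section Main3.
Variables (N : nat) (a b : 'I_N).
Hypotheses (ha : val a = 0%N) (hb : val b = 1%N).
Local Notation tab := (tperm a b).
Local Notation H := (HH a b).
Ltac glia := repeat match goal with
 | H : context [HH ?x ?y ?w] |- _ => revert H
 end; repeat match goal with
 | |- context [HH ?x ?y ?w] => let z := fresh "z" in move: (HH x y w) => z end; intros; lia.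

Lemma abneq : a != b. Proof. exact: ab_neq. Qed.

Lemma words_lb k r v : v \in words N k r -> (N.*2.-1 <= H v + r.*2)%N.
Proof.
elim: r v => [|r IH] v /=.
  by rewrite inE => /eqP ->; rewrite H1 //; lia.
case/imset2P => t u ht hu ->; rewrite inE in ht.
case/existsP: ht => a' /existsP [b' /existsP [i /existsP [j /and5P [/eqP ha' /eqP hb' _ _ /eqP ->]]]].
have -> : a' = a by apply: val_inj; rewrite ha' ha.
have -> : b' = b by apply: val_inj; rewrite hb' hb.
rewrite /ppmul. move: (IH u hu) (HL1 ha hb u i j); clear IH; glia.
Qed.

Lemma Tgen_mono k k' : (k <= k')%N -> Tgen N k \subset Tgen N k'.
Proof.
move=> hk; apply/subsetP => t; rewrite !inE.
move=> /existsP [x1 /existsP [x2 /existsP [x3 /existsP [x4 /and5P [h1 h2 h3 h4 h5]]]]].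
apply/existsP; exists x1; apply/existsP; exists x2; apply/existsP; exists x3.
apply/existsP; exists x4; apply/and5P; split => //; exact: leq_trans h4 hk.
Qed.

Lemma words_mono k k' r : (k <= k')%N -> words N k r \subset words N k' r.
Proof.
move=> hk; elim: r => [|r IH] //=.
apply/subsetP => v /imset2P [t u ht hu ->].
by apply: imset2_f; [exact: (subsetP (Tgen_mono hk)) | exact: (subsetP IH)].
Qed.

Lemma alt2 v : v \in Alt_k N 2 -> v = 1.
Proof.
rewrite inE => /andP [hodd /forallP hf].
have fix2 (x : 'I_N) : (2 <= x)%N -> v x = x by move=> h; apply/eqP; exact: (implyP (hf x) h).
have ab (y : 'I_N) : (nat_of_ord y < 2)%N -> y = a \/ y = b.
  move=> hy; have [h0|h1] : nat_of_ord y = 0%N \/ nat_of_ord y = 1%N by lia.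
    by left; apply: val_inj; rewrite /= h0 ha.
  by right; apply: val_inj; rewrite /= h1 hb.
have small (y : 'I_N) : (nat_of_ord y < 2)%N -> (nat_of_ord (v y) < 2)%N.
  move=> hy; rewrite ltnNge; apply/negP => h.
  have := fix2 _ h => /perm_inj hvy; move: h; rewrite hvy; lia.
have va : v a = a \/ v a = b by apply: ab; apply: small; rewrite ha.
have vb : v b = a \/ v b = b by apply: ab; apply: small; rewrite hb.
have nab := abneq.
case: va => va.
  have vbb : v b = b.
    case: vb => // vb; have : v a = v b by rewrite va vb.
    by move/perm_inj => eab; move: nab; rewrite eab eqxx.
  apply/permP => x; rewrite perm1.
  have [hx|hx] := ltnP (nat_of_ord x) 2; last exact: fix2.
  by case: (ab _ hx) => ->.
have vba : v b = a.
  case: vb => // vb; have : v a = v b by rewrite va vb.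
    by move/perm_inj => eab; move: nab; rewrite eab eqxx.
have : v = tab.
  apply/permP => x.
  have [hx|hx] := ltnP (nat_of_ord x) 2.
    by case: (ab _ hx) => ->; rewrite ?tpermL ?tpermR.
  rewrite tpermD ?fix2 //; apply/eqP => /(congr1 val); rewrite ?ha ?hb /=; lia.
by move=> ev; move: hodd; rewrite ev odd_tperm nab.
Qed.

Lemma words_ub k : (2 <= k <= N)%N -> forall v, v \in Alt_k N k ->
  forall r, (H v + r.*2 = N.*2.-1)%N -> v \in words N k r.
Proof.
elim: k => [|k IH] //; move=> /andP [hk2 hkN] v hv r hr.
have [k1|k2] : k = 1%N \/ (2 <= k)%N by lia.
  subst k; rewrite (alt2 hv) in hr *; rewrite H1 // in hr.
  have -> : r = 0%N by lia.
  by rewrite /= inE.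
pose K := Ordinal hkN.
have hv' := hv; rewrite inE in hv'; case/andP: hv' => hodd /forallP hf.
have fixk (x : 'I_N) : (k.+1 <= x)%N -> v x = x.
  by move=> h; apply/eqP; exact: (implyP (hf x) h).
have [vK|vK] := eqVneq (v K) K.
  have hv2 : v \in Alt_k N k.
    rewrite inE hodd /=; apply/forallP => x; apply/implyP => hx.
    have [hlt|heq] : (k < x)%N \/ nat_of_ord x = k by lia.
      by rewrite fixk.
    have -> : x = K by apply: val_inj.
    by rewrite vK.
  apply: (subsetP (words_mono r (leqnSn k))).
  apply: IH => //; by rewrite k2 ltnW.
pose i := tab (v K).
pose w := tperm i K * tab.
pose u := v * w^-1.
have lvK : (nat_of_ord (v K) < k)%N.
  have hne : nat_of_ord (v K) != k.
    by apply: contra vK => /eqP h; apply/eqP; apply: val_inj.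
  rewrite ltn_neqAle hne /= leqNgt; apply/negP => h.
  have := fixk _ h => /perm_inj e; move: vK; by rewrite e eqxx.
have hi : (nat_of_ord i < k)%N.
  rewrite /i; case: tpermP => [_|_|_ _]; rewrite ?ha ?hb /=; lia.
have iK : i != K by apply/eqP => /(congr1 val) /= e; lia.
have aK : a != K by apply/eqP => /(congr1 val); rewrite ha /=; lia.
have bK : b != K by apply/eqP => /(congr1 val); rewrite hb /=; lia.
have wK : w K = v K by rewrite /w permM tpermR /i tpermK.
have uK : u K = K by rewrite /u permM -wK permK.
have ev : v = u * w by rewrite /u mulgKV.
have hu : u \in Alt_k N k.
  rewrite inE; apply/andP; split.
    rewrite /u /w odd_permM odd_permV odd_permM !odd_tperm iK abneq.
    by move: hodd; case: (odd_perm v).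
  apply/forallP => x; apply/implyP => hx.
  have [hlt|heq] : (k < x)%N \/ nat_of_ord x = k by lia.
    have wx : w x = x.
      have xi : i != x by apply/eqP => /(congr1 val) /= e; lia.
      have xK : K != x by apply/eqP => /(congr1 val) /= e; lia.
      have xa : a != x by apply/eqP => /(congr1 val); rewrite ha /=; lia.
      have xb : b != x by apply/eqP => /(congr1 val); rewrite hb /=; lia.
      by rewrite /w permM (tpermD xi xK) (tpermD xa xb).
    by rewrite /u permM fixk // -{1}wx permK.
  have -> : x = K by apply: val_inj.
  by rewrite uK.
have hH := HL2' ha hb uK iK aK bK.
rewrite -/w -ev in hH.
have [r' hr'] := HB ha hb u.
have -> : r = r'.+1 by move: hr hr' hH; glia.
rewrite ev /=; apply/imset2P; exists w u.
- rewrite inE; apply/existsP; exists a; apply/existsP; exists b.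
  apply/existsP; exists i; apply/existsP; exists K.
  by rewrite ha hb /= hi ltnSn eqxx.
- apply: (subsetP (words_mono r' (leqnSn k))).
  apply: IH => //; by rewrite k2 ltnW.
- by [].
Qed.

Lemma Akm_char k m v : (2 <= k <= N)%N ->
  (v \in Akm N k m) = (v \in Alt_k N k) && (H v + m.*2 == N.*2.-1)%N.
Proof.
move=> hk; rewrite inE; apply/and3P/andP.
  case=> hA hw /forallP hf; split => //.
  have [r0 hr0] := HB ha hb v.
  have lb := words_lb hw.
  have [hlt|hge] := ltnP r0 m.
    by have := hf (Ordinal hlt); rewrite (words_ub hk hA hr0).
  by apply/eqP; move: hr0 lb hge; glia.
case=> hA /eqP hm; split => //; first exact: words_ub.
apply/forallP => r; apply/negP => hr; have := words_lb hr; have := ltn_ord r.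
move: hm; glia.
Qed.

Lemma main_sec m : (3 <= N)%N -> (1 <= m)%N ->
  Akm N N m =
    [set ppmul u w | u : {perm 'I_N} in Akm N N.-1 m.-1, w : {perm 'I_N} in Rn N :\ 1%g] :|: Akm N N.-1 m
  /\ [disjoint [set ppmul u w | u : {perm 'I_N} in Akm N N.-1 m.-1, w : {perm 'I_N} in Rn N :\ 1%g]
       & Akm N N.-1 m].
Proof.
move=> hN hm.
have k1 : (2 <= N.-1 <= N)%N by apply/andP; split; lia.
have k0 : (2 <= N <= N)%N by apply/andP; split; lia.
have hL : (N.-1 < N)%N by lia.
pose L := Ordinal hL.
have aL : a != L by apply/eqP => /(congr1 val); rewrite ha /=; lia.
have bL : b != L by apply/eqP => /(congr1 val); rewrite hb /=; lia.
have tL : tab L = L by rewrite tpermD.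
have altL (u : {perm 'I_N}) : (u \in Alt_k N N.-1) = ~~ odd_perm u && (u L == L).
  rewrite inE; congr andb; apply/forallP/eqP.
    by move=> h; apply/eqP; exact: (implyP (h L) (leqnn _)).
  move=> h x; apply/implyP => hx.
  have -> : x = L by apply: val_inj => /=; have := ltn_ord x; lia.
  by rewrite h.
have altN (u : {perm 'I_N}) : (u \in Alt_k N N) = ~~ odd_perm u.
  rewrite inE; case: (odd_perm u) => //=; apply/forallP => x; apply/implyP.
  by rewrite leqNgt ltn_ord.
set S := [set ppmul u w | u : {perm 'I_N} in _, w : {perm 'I_N} in _].
have hS v : v \in S -> [/\ ~~ odd_perm v, v L != L & (H v + m.*2 = N.*2.-1)%N].
  case/imset2P => u w hu hw ->.
  rewrite Akm_char // altL in hu; case/andP: hu => /andP [hou /eqP uL] /eqP hmu.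
  rewrite !inE in hw; case/andP: hw => hw1 /orP [hw|hw]; last by rewrite hw in hw1.
  case/existsP: hw => a' /existsP [b' /existsP [i /existsP [j /and5P [/eqP ha' /eqP hb' /eqP hj hij /eqP ->]]]].
  have -> : a' = a by apply: val_inj; rewrite ha' ha.
  have -> : b' = b by apply: val_inj; rewrite hb' hb.
  have -> : j = L by apply: val_inj; rewrite hj.
  have iL : i != L.
    apply/eqP => e; move: hij; rewrite e hj /=; lia.
  rewrite /ppmul; split.
  - by rewrite odd_permM odd_permM !odd_tperm iL abneq.
  - rewrite permM permM tpermR; apply/eqP => e.
    have : u (tab i) = u L by rewrite e uL.
    move/perm_inj => e2; move: iL; by rewrite -[i](tpermK a b) e2 tL eqxx.
  - have := HL2 ha hb uL iL aL bL; move: hmu; glia.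
split.
  apply/setP => v; rewrite in_setU Akm_char // altN Akm_char // altL.
  apply/idP/idP.
    case/andP => hodd /eqP hm'.
    have [vL|vL] := eqVneq (v L) L.
      by rewrite hodd hm' eqxx orbT.
    apply/orP; left.
    pose i := (v^-1)%g L.
    pose w := tperm i L * tab.
    pose u := w^-1 * v.
    have iL : i != L.
      apply/eqP => e; move: vL; by rewrite -{1}e /i permKV eqxx.
    have wi : w i = L by rewrite /w permM tpermL tL.
    have uL : u L = L by rewrite /u permM -wi permK /i permKV.
    have ev : v = w * u by rewrite /u mulKVg.
    apply/imset2P; exists u w.
    - rewrite Akm_char // altL uL eqxx andbT.
      rewrite /u odd_permM odd_permV odd_permM !odd_tperm iL abneq /=.
      rewrite hodd /=.
      have := HL2 ha hb uL iL aL bL; rewrite -/w -ev.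
      move: hm'; glia.
    - rewrite !inE; apply/andP; split.
        apply/eqP => w1; move: wi; rewrite w1 perm1 => e; by move: iL; rewrite e eqxx.
      apply/orP; left; apply/existsP; exists a; apply/existsP; exists b.
      apply/existsP; exists i; apply/existsP; exists L.
      rewrite ha hb /= eqxx /=; apply/andP; split; last by [].
      rewrite ltn_neqAle; apply/andP; split.
        by apply: contra iL => /eqP e; apply/eqP; apply: val_inj.
      by have := ltn_ord i; rewrite /=; lia.
    - by rewrite /ppmul -ev.
  case/orP => [/hS [-> _ ->] //| /andP [/andP [-> _] ->] //].
  by rewrite eqxx.
rewrite -setI_eq0; apply/eqP/setP => v; rewrite in_setI in_set0; apply/negP => /andP [h1 h2].
have [_ vL _] := hS v h1.
rewrite Akm_char // altL in h2; case/andP: h2 => /andP [_ vL'] _.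
by rewrite vL' in vL.
Qed.
End Main3.

End Helpers.
Import Helpers.
Unset Implicit Arguments.

Theorem theorem5p3 (n m : nat) :
  (3 <= n)%N -> (1 <= m)%N ->
  Akm n n m =
    [set ppmul u w | u : {perm 'I_n} in Akm n n.-1 m.-1, w : {perm 'I_n} in Rn n :\ 1%g] :|: Akm n n.-1 m
  /\ [disjoint [set ppmul u w | u : {perm 'I_n} in Akm n n.-1 m.-1, w : {perm 'I_n} in Rn n :\ 1%g]
       & Akm n n.-1 m].
Proof.
move=> hn hm.
have h0 : (0 < n)%N by apply: leq_trans hn.
have h1 : (1 < n)%N by apply: leq_trans hn.
exact: (@main_sec n (Ordinal h0) (Ordinal h1) erefl erefl m hn hm).
Qed.
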